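(* Let $(\mathrm{Con},\sqsubseteq,(s_i)_{i \in G})$ be a spatial constraint system whose underlying lattice $(\mathrm{Con},\sqsubseteq)$ is completely distributive. For $K \subseteq G$ define $\delta^+_K : \mathrm{Con} \to \mathrm{Con}$ by \[ \delta^+_K(c) = \bigwedge\left\{ \bigsqcup_{k \in K} s_k(a_k) \;\middle|\; (a_k)_{k \in K} \in \mathrm{Con}^K \text{ and } \bigsqcup_{k \in K} a_k \sqsupseteq c \right\}. \] Then, for any $K \subseteq G$, $\delta^+_K$ is a space function.
   Context: A constraint system is a complete lattice $(\mathrm{Con}, \sqsubseteq)$ with join $\sqcup$ (and $\bigsqcup$ for arbitrary joins), bottom $\mathit{true}$; $\bigwedge$ denotes the greatest lower bound (meet) of a set in $(\mathrm{Con},\sqsubseteq)$, and $c \sqsupseteq d$ means $d \sqsubseteq c$. A space function is a continuous self-map $f:\mathrm{Con}\to\mathrm{Con}$ (i.e., preserving joins of directed sets) such that $f(\mathit{true})=\mathit{true}$ and $f(c \sqcup d) = f(c) \sqcup f(d)$ for all $c,d$. A spatial constraint system $(\mathrm{Con},\sqsubseteq,(s_i)_{i \in G})$ is a constraint system equipped with a space function $s_i$ for each agent $i$ of a possibly infinite set $G$. $\mathrm{Con}^K$ is the set of $K$-tuples, i.e., functions $K \to \mathrm{Con}$. A lattice is completely distributive if it is complete and for any doubly indexed family $\{x_{ij}\}_{i\in I, j \in J_i}$, $\bigsqcup_{i\in I}\bigwedge_{j\in J_i} x_{ij} = \bigwedge_{f\in F}\bigsqcup_{i \in I} x_{i f(i)}$,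 where $F$ is the class of choice functions $f$ with $f(i)\in J_i$. *)

(* Defs.v *)
From Stdlib Require Import Classical.

Set Implicit Arguments.

Record CLattice := {
  car :> Type;
  le : car -> car -> Prop;
  sup : (car -> Prop) -> car;
  le_refl : forall x, le x x;
  le_trans : forall x y z, le x y -> le y z -> le x z;
  le_antisym : forall x y, le x y -> le y x -> x = y;
  sup_ub : forall (S : car -> Prop) x, S x -> le x (sup S);
  sup_least : forall (S : car -> Prop) y, (forall x, S x -> le x y) -> le (sup S) y
}.

Arguments le {c}.
Arguments sup {c}.

Section Ops.
Variable C : CLattice.

Definition inf (S : C -> Prop) : C := sup (fun y => forall x, S x -> le y x).

Definition join (x y : C) : C := sup (fun z => z = x \/ z = y).

Definition bot : C := sup (fun _ => False).

Definition bigsup (I : Type) (F : I -> C) : C := sup (fun z => exists i, z = F i).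
Definition biginf (I : Type) (F : I -> C) : C := inf (fun z => exists i, z = F i).

Definition directed (D : C -> Prop) : Prop :=
  (exists x, D x) /\
  (forall x y, D x -> D y -> exists z, D z /\ le x z /\ le y z).

Definition continuous (f : C -> C) : Prop :=
  forall D : C -> Prop, directed D ->
    f (sup D) = sup (fun z => exists x, D x /\ z = f x).

Definition space_function (f : C -> C) : Prop :=
  continuous f /\ f bot = bot /\ (forall c d, f (join c d) = join (f c) (f d)).

Definition completely_distributive : Prop :=
  forall (I : Type) (J : I -> Type) (x : forall i, J i -> C),
    bigsup (fun i => biginf (fun j : J i => x i j)) =
    biginf (fun f : (forall i, J i) => bigsup (fun i => x i (f i))).

End Ops.

Arguments bot {C}.
Arguments join {C}.
Arguments inf {C}.

Definition spatial_cs (C : CLattice) (G : Type) (s : G -> C -> C) : Prop :=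
  forall i, @space_function C (s i).

(** δ^+_K(c) = ⋀ { ⊔_{k∈K} s_k(a_k) | (a_k) ∈ Con^K, ⊔_{k∈K} a_k ⊒ c },
    with K ⊆ G given as a predicate and Con^K = functions {k | K k} -> Con. *)
Definition delta_plus (C : CLattice) (G : Type) (s : G -> C -> C)
    (K : G -> Prop) (c : C) : C :=
  inf (fun z => exists a : {k : G | K k} -> C,
         le c (@bigsup C _ a) /\
         z = @bigsup C _ (fun k : {k : G | K k} => s (proj1_sig k) (a k))).

(* Main.v *)
Require Import Defs.
From Stdlib Require Import List.
Set Implicit Arguments.

Section H.
Variable C : CLattice.

Lemma sup_ext (P Q : C -> Prop) : (forall x, P x <-> Q x) -> sup P = sup Q.
Proof.
  intros H. apply le_antisym; apply sup_least; intros x Hx; apply sup_ub; apply H; auto.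
Qed.

Lemma inf_ext (P Q : C -> Prop) : (forall x, P x <-> Q x) -> inf P = inf Q.
Proof.
  intros H. unfold inf. apply sup_ext. intros y; split; intros Hy x Hx; apply Hy; apply H; auto.
Qed.

Lemma inf_lb (P : C -> Prop) z : P z -> le (inf P) z.
Proof. intros Hz. unfold inf. apply sup_least. intros y Hy. apply Hy; auto. Qed.

Lemma inf_glb (P : C -> Prop) y : (forall z, P z -> le y z) -> le y (inf P).
Proof. intros H. unfold inf. apply (@sup_ub C (fun y => forall x, P x -> le y x)). auto. Qed.

Lemma join_l (x y : C) : le x (join x y).
Proof. unfold join. apply sup_ub. auto. Qed.
Lemma join_r (x y : C) : le y (join x y).
Proof. unfold join. apply sup_ub. auto. Qed.
Lemma join_least (x y z : C) : le x z -> le y z -> le (join x y) z.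
Proof. intros. unfold join. apply sup_least. intros w [->| ->]; auto. Qed.

Lemma join_eq (x y : C) : le x y -> join x y = y.
Proof. intros. apply le_antisym. apply join_least; auto using le_refl. apply join_r. Qed.

Lemma bot_le (x : C) : le bot x.
Proof. unfold bot. apply sup_least. intros _ []. Qed.

Lemma sf_mono (f : C -> C) : space_function C f -> forall x y, le x y -> le (f x) (f y).
Proof.
  intros [_ [_ Hj]] x y H. rewrite <- (@join_eq x y H). rewrite Hj. apply join_l.
Qed.

Definition fj (l : list C) : C := fold_right join bot l.

Lemma sf_sup (f : C -> C) : space_function C f -> forall S : C -> Prop,
  le (f (sup S)) (sup (fun z => exists x, S x /\ z = f x)).
Proof.
  intros Hf S. pose proof Hf as [Hc [Hb Hj]].
  set (T := sup (fun z => exists x, S x /\ z = f x)).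
  set (D := fun y => exists l, Forall S l /\ y = fj l).
  assert (HD : directed C D).
  { split. exists bot. exists nil. split; auto.
    intros x y [l1 [H1 ->]] [l2 [H2 ->]]. exists (fj (l1 ++ l2)). split.
    exists (l1 ++ l2). split; auto. apply Forall_app; auto.
    split.
    - induction l1 as [|a l IH]; simpl. apply bot_le.
      apply join_least. apply join_l. eapply le_trans. apply IH. inversion H1; auto. apply join_r.
    - induction l1 as [|a l IH]; simpl. apply le_refl.
      eapply le_trans. apply IH. inversion H1; auto. apply join_r. }
  eapply le_trans. apply (@sf_mono f Hf _ (sup D)).
  { apply sup_least. intros x Hx. eapply le_trans. 2: apply sup_ub.
    2: exists (x :: nil); split; [constructor; auto|reflexivity]. simpl. apply join_l. }
  rewrite (Hc D HD). apply sup_least. intros z [y [[l [Hl ->]] ->]].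
  induction l as [|a l IH]; simpl. rewrite Hb. apply bot_le.
  rewrite Hj. inversion Hl; subst. apply join_least; auto.
  unfold T. apply sup_ub. eauto.
Qed.

End H.

Theorem mainTheorem6 (C : CLattice) (G : Type) (s : G -> C -> C) :
  @spatial_cs C G s -> completely_distributive C ->
  forall K : G -> Prop, @space_function C (@delta_plus C G s K).
Proof.
  intros Hs Hcd K.
  set (d := @delta_plus C G s K).
  assert (Hm : forall x y, le x y -> le (d x) (d y)).
  { intros x y H. unfold d, delta_plus. apply inf_glb. intros z [a [Ha ->]].
    apply inf_lb. exists a. split; auto. eapply le_trans; eauto. }
  assert (Hsup : forall S : C -> Prop, le (d (sup S)) (sup (fun z => exists x, S x /\ z = d x))).
  { intros S.
    set (X := fun a : {k : G | K k} -> C => @bigsup C _ (fun k : {k : G | K k} => s (proj1_sig k) (a k))).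
    set (J := fun i : {x : C | S x} => {a : {k : G | K k} -> C | le (proj1_sig i) (@bigsup C _ a)}).
    assert (E : sup (fun z => exists x, S x /\ z = d x) =
       @bigsup C _ (fun i : {x : C | S x} => @biginf C _ (fun j : J i => X (proj1_sig j)))).
    { unfold bigsup. apply sup_ext. intros z. split.
      - intros [x [Hx ->]]. exists (exist _ x Hx). unfold d, delta_plus, biginf.
        apply inf_ext. intros w; split.
        + intros [a [Ha ->]]. exists (exist _ a Ha). reflexivity.
        + intros [[a Ha] ->]. exists a; split; auto.
      - intros [[x Hx] ->]. exists x. split; auto. unfold d, delta_plus, biginf.
        apply inf_ext. intros w; split.
        + intros [[a Ha] ->]. exists a; split; auto.
        + intros [a [Ha ->]]. exists (exist _ a Ha). reflexivity. }
    rewrite E, Hcd. unfold biginf. apply inf_glb. intros z [f ->].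
    set (a' := fun k : {k : G | K k} => @bigsup C _ (fun i : {x : C | S x} => proj1_sig (f i) k)).
    eapply le_trans. apply (@inf_lb C _ (X a')). exists a'. split; [|reflexivity].
    { apply sup_least. intros x Hx. eapply le_trans. apply (proj2_sig (f (exist _ x Hx))).
      apply sup_least. intros y [k ->]. eapply le_trans. 2: apply sup_ub; exists k; reflexivity.
      unfold a'. apply sup_ub. exists (exist _ x Hx). reflexivity. }
    unfold X at 1. apply sup_least. intros y [k ->].
    eapply le_trans. apply sf_mono. apply (Hs (proj1_sig k)). apply le_refl.
    eapply le_trans. apply (sf_sup (Hs (proj1_sig k))). apply sup_least.
    intros w [v [[i ->] ->]]. eapply le_trans. 2: apply sup_ub; exists i; reflexivity.
    unfold X. apply sup_ub. exists k. reflexivity. }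
  split; [|split].
  - intros D HD. apply le_antisym. apply Hsup.
    apply sup_least. intros z [x [Hx ->]]. apply Hm. apply sup_ub; auto.
  - apply le_antisym; [|apply bot_le]. eapply le_trans. apply Hsup.
    apply sup_least. intros z [x [[] _]].
  - intros x y. apply le_antisym.
    + eapply le_trans. apply Hsup. apply sup_least. intros z [w [[-> | ->] ->]].
      apply join_l. apply join_r.
    + apply join_least; apply Hm; [apply join_l|apply join_r].
Qed.
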